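(* Let $\Lambda$ be a block of bounded weights and $\Delta$ the block containing $\mathrm{cl}(\Lambda)$. If $\lambda\in\Delta\setminus\mathrm{cl}(\Lambda)$ and $\mu\ge\lambda$ in the Bruhat order, then $\mu\in\Delta\setminus\mathrm{cl}(\Lambda)$.
   Context: A number line carries vertices indexed by a finite set of consecutive integers here. A (bounded) weight labels each vertex by $\circ,\times,\vee,\wedge$. Bruhat order: generated by declaring that interchanging a $\vee$ with an $\wedge$ to its right makes a weight bigger. A block is an equivalence class of weights under permuting $\vee$'s and $\wedge$'s. For a block $\Lambda$ of bounded weights, each having $p$ labels $\wedge$ and $q$ labels $\vee$, the closure $\mathrm{cl}(\lambda)$ of $\lambda\in\Lambda$ is the weight obtained by adding $p$ new vertices labelled $\vee$ at the left end of the number line and $q$ new vertices labelled $\wedge$ at the right end; $\mathrm{cl}(\Lambda)=\{\mathrm{cl}(\lambda)\mid\lambda\in\Lambda\}$. *)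

(* Defs.v *)
From HB Require Import structures.
From mathcomp Require Import all_boot.
Set Implicit Arguments. Unset Strict Implicit. Unset Printing Implicit Defensive.

Inductive label := Circ | Cross | Down | Up.

Definition label_code (l : label) : nat :=
  match l with Circ => 0 | Cross => 1 | Down => 2 | Up => 3 end.
Definition code_label (n : nat) : label :=
  match n with 0 => Circ | 1 => Cross | 2 => Down | _ => Up end.
Lemma label_codeK : cancel label_code code_label. Proof. by case. Qed.
HB.instance Definition _ := Equality.copy label (can_type label_codeK).

(* A bounded weight: labels of the vertices of a finite number line of
   consecutive integers, listed from left to right. *)
Definition weight := seq label.

Definition core (l : label) : nat :=
  match l with Circ => 0 | Cross => 1 | Down | Up => 2 end.

Definition same_block (lam mu : weight) : bool :=
  (map core lam == map core mu) && perm_eq lam mu.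

Definition bruhat_step (lam mu : weight) : Prop :=
  exists i j, [/\ i < j, j < size lam, nth Circ lam i = Down,
    nth Circ lam j = Up &
    mu = set_nth Circ (set_nth Circ lam i Up) j Down].

(* Bruhat order: reflexive-transitive wclosure; bruhat_le lam mu means lam <= mu. *)
Inductive bruhat_le : weight -> weight -> Prop :=
| bruhat_refl lam : bruhat_le lam lam
| bruhat_trans lam nu mu : bruhat_step lam nu -> bruhat_le nu mu -> bruhat_le lam mu.

Definition wclosure (lam : weight) : weight :=
  nseq (count_mem Up lam) Down ++ lam ++ nseq (count_mem Down lam) Up.

(* Main.v *)
Require Import Defs.
From mathcomp Require Import all_boot.
From mathcomp Require Import zify.

Lemma nth_le_count (a : pred label) s n : n < size s -> a (nth Circ s n) <= count a s.
Proof.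
move=> hn; rewrite -(cat_take_drop n s) (drop_nth Circ) // count_cat /=.
rewrite nth_cat size_take hn ltnn subnn /=. lia.
Qed.

Lemma step_block lam mu : bruhat_step lam mu -> same_block lam mu.
Proof.
case=> i [j [hij hj hi hjU ->]].
have hi' : i < size lam by apply: ltn_trans hj.
apply/andP; split.
  apply/eqP; apply: (@eq_from_nth _ 0); first by rewrite !size_map !size_set_nth; lia.
  move=> k; rewrite size_map => hk.
  rewrite (nth_map Circ) // (nth_map Circ); last by rewrite !size_set_nth; lia.
  rewrite nth_set_nth /= nth_set_nth /=.
  case: (k =P j) => [->|_]; first by rewrite hjU.
  by case: (k =P i) => [->|_]; rewrite ?hi.
apply/permP => a.
have hs1 : j < size (set_nth Circ lam i Up) by rewrite size_set_nth; lia.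
rewrite count_set_nth_ltn // count_set_nth_ltn // nth_set_nth /=.
have -> : (j == i) = false by apply/eqP; lia.
rewrite hjU.
have := nth_le_count a _ _ hi'; rewrite hi.
case: (a Up); case: (a Down) => /=; lia.
Qed.

Lemma same_block_trans a b c : same_block a b -> same_block b c -> same_block a c.
Proof.
case/andP=> /eqP h1 p1 /andP [/eqP h2 p2]; apply/andP; split.
  by rewrite h1 h2.
exact: perm_trans p1 p2.
Qed.

Section S.
Variable lam0 : weight.
Let p := count_mem Up lam0.
Let q := count_mem Down lam0.
Let n := size lam0.

Definition P (w : weight) := forall k,
  (k < p -> nth Circ w k = Down) /\ (p + n <= k < p + n + q -> nth Circ w k = Up).

Lemma cl_P w : (exists nu, same_block lam0 nu /\ w = wclosure nu) -> P w.
Proof.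
case=> nu [/andP [/eqP hc hp] ->] k.
have hsz : size nu = n by rewrite /n -(size_map core) -hc size_map.
have hcu : count_mem Up nu = p by rewrite /p (permP hp).
have hcd : count_mem Down nu = q by rewrite /q (permP hp).
rewrite /wclosure hcu hcd; split=> hk.
  by rewrite nth_cat size_nseq hk nth_nseq hk.
rewrite nth_cat size_nseq.
have -> : (k < p) = false by lia.
rewrite nth_cat hsz.
have -> : (k - p < n) = false by lia.
rewrite nth_nseq.
by have -> : (k - p - n < q) by lia.
Qed.

Lemma P_cl w : same_block (wclosure lam0) w -> P w ->
  exists nu, same_block lam0 nu /\ w = wclosure nu.
Proof.
move=> /andP [/eqP hc hp] hP.
have hsz : size w = p + n + q.
  by rewrite -(size_map core) -hc size_map /wclosure !size_cat !size_nseq; lia.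
set nu := take n (drop p w).
have hsnu : size nu = n by rewrite size_takel // size_drop hsz; lia.
have ew : w = nseq p Down ++ nu ++ nseq q Up.
  apply: (@eq_from_nth _ Circ); first by rewrite hsz !size_cat !size_nseq hsnu addnA.
  move=> k hk.
  rewrite nth_cat size_nseq nth_nseq.
  case: ltnP => h1; first by have [->] := hP k.
  rewrite nth_cat hsnu.
  case: ltnP => h2.
    by rewrite nth_take // nth_drop; congr nth; lia.
  rewrite nth_nseq.
  have -> : k - p - n < q by lia.
  have [_ h] := hP k; apply: h; apply/andP; split; lia.
have hb : same_block lam0 nu.
  apply/andP; split.
    move: hc; rewrite ew /wclosure -/p -/q !map_cat => /eqP.
    rewrite eqseq_cat ?size_map ?size_nseq // => /andP [_].
    by rewrite eqseq_cat ?size_map // => /andP [].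
  by move: hp; rewrite ew /wclosure -/p -/q perm_cat2l perm_cat2r.
exists nu; split=> //.
case/andP: hb => _ hpn.
by rewrite /wclosure -(permP hpn) -(permP hpn) -/p -/q.
Qed.

Lemma step_P lam mu : size lam <= p + n + q -> bruhat_step lam mu -> P mu -> P lam.
Proof.
move=> hs; case=> i [j [hij hj hi hjU ->]] hP.
have hi_ge : p <= i.
  case: (ltnP i p) => // hlt; have [h _] := hP i; move: (h hlt).
  rewrite nth_set_nth /= nth_set_nth /=.
  have -> : (i == j) = false by apply/eqP; lia.
  by rewrite eqxx.
have hj_lt : j < p + n.
  case: (ltnP j (p + n)) => // hge.
  have hjq : j < p + n + q by lia.
  have [_ h] := hP j; have hjr : p + n <= j < p + n + q by apply/andP; split.
  move: (h hjr).
  by rewrite nth_set_nth /= nth_set_nth /= eqxx.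
move=> k; split=> hk.
  have [h _] := hP k; move: (h hk); rewrite nth_set_nth /= nth_set_nth /=.
  have -> : (k == j) = false by apply/eqP; lia.
  by have -> : (k == i) = false by apply/eqP; lia.
have [_ h] := hP k; move: (h hk); rewrite nth_set_nth /= nth_set_nth /=.
have -> : (k == j) = false by apply/eqP; lia.
by have -> : (k == i) = false by apply/eqP; lia.
Qed.
End S.

Theorem lemma4p1 (lam0 lam mu : weight) :
  same_block (wclosure lam0) lam ->
  ~ (exists nu, same_block lam0 nu /\ lam = wclosure nu) ->
  bruhat_le lam mu ->
  same_block (wclosure lam0) mu /\ ~ (exists nu, same_block lam0 nu /\ mu = wclosure nu).
Proof.
move=> hb hn hle; elim: hle hb hn => {lam mu} [l | l nu m hst _ IH] hb hn; first by split.
apply: IH; first exact: (same_block_trans _ _ _ hb (step_block _ _ hst)).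
move=> hc; apply: hn; apply: P_cl => //.
apply: (step_P _ _ _ _ hst (cl_P _ _ hc)).
case/andP: hb => /eqP hc' _.
by rewrite -(size_map core) -hc' size_map /wclosure !size_cat !size_nseq addnA.
Qed.
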